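(* Let $f:(0,\infty)\to\mathbb R$ be convex with $f(1)=0$, and let $\bar f(x):=\sup_{t>0}\{tx-f(t)\}$, $x\in\mathbb R$, be its convex conjugate. Let $\rho>1$, $n\ge2$, $\mathcal A_n=\{1,\dots,n\}$, and $u_f(n,\rho):=\max_{Q\in\mathcal P_n(\rho)}D_f(Q\|U_n)$. Then: (a) for every $P\in\mathcal P_n(\rho)$, $X\sim P$, and every $g:\mathcal A_n\to\mathbb R$: $\mathbb E[g(X)]\le u_f(n,\rho)+\frac1n\sum_{i=1}^n\bar f(g(i))$; (b) there exists $P\in\mathcal P_n(\rho)$ such that for every $\varepsilon>0$ there is $g_\varepsilon:\mathcal A_n\to\mathbb R$ with $\mathbb E[g_\varepsilon(X)]\ge u_f(n,\rho)+\frac1n\sum_{i=1}^n\bar f(g_\varepsilon(i))-\varepsilon$, where $X\sim P$.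
   Context: $\mathcal P_n(\rho)$: probability mass functions on $\mathcal A_n$ with all masses positive and max/min mass ratio at most $\rho$; $U_n$ uniform on $\mathcal A_n$; $D_f(P\|Q)=\sum_xQ(x)f(P(x)/Q(x))$ (conventions $0f(0/0)=0$, $f(0)=\lim_{t\to0^+}f(t)$). *)

(* Defs.v *)
From Stdlib Require Import Reals Lra ClassicalEpsilon.
Open Scope R_scope.

(* Finite sum F 0 + ... + F (n-1); index i (0-based) stands for letter i+1 of A_n. *)
Fixpoint rsum (n : nat) (F : nat -> R) : R :=
  match n with O => 0 | S k => rsum k F + F k end.

(* f is convex on (0, oo); values of f outside (0,oo) are irrelevant. *)
Definition convex_pos (f : R -> R) : Prop :=
  forall x y l, 0 < x -> 0 < y -> 0 <= l <= 1 ->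
    f (l * x + (1 - l) * y) <= l * f x + (1 - l) * f y.

Definition in_Pn (n : nat) (rho : R) (P : nat -> R) : Prop :=
  (forall i, (i < n)%nat -> 0 < P i) /\
  rsum n P = 1 /\
  (forall i j, (i < n)%nat -> (j < n)%nat -> P i <= rho * P j).

(* D_f(Q || U_n) = sum_x (1/n) f(Q(x) / (1/n)); all masses positive so no conventions needed. *)
Definition Df_unif (f : R -> R) (n : nat) (Q : nat -> R) : R :=
  rsum n (fun i => / INR n * f (Q i / / INR n)).

Definition expect (n : nat) (P g : nat -> R) : R := rsum n (fun i => P i * g i).

Definition is_uf (f : R -> R) (n : nat) (rho u : R) : Prop :=
  (exists Q, in_Pn n rho Q /\ Df_unif f n Q = u) /\
  (forall Q, in_Pn n rho Q -> Df_unif f n Q <= u).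

(* Convex conjugate fbar(x) = sup_{t>0} (t x - f t), a value in R ∪ {+oo}. *)
Definition conj_set (f : R -> R) (x : R) : R -> Prop :=
  fun y => exists t, 0 < t /\ y = t * x - f t.

Definition conj_finite (f : R -> R) (x : R) : Prop := bound (conj_set f x).

Lemma conj_set_ne (f : R -> R) (x : R) : exists y, conj_set f x y.
Proof. exists (1 * x - f 1). exists 1. split; [lra | reflexivity]. Qed.

(* the real value of fbar(x) when it is finite (junk value 0 when fbar(x) = +oo) *)
Definition fconj (f : R -> R) (x : R) : R :=
  match excluded_middle_informative (conj_finite f x) with
  | left H => proj1_sig (completeness (conj_set f x) H (conj_set_ne f x))
  | right _ => 0
  end.

(* Main.v *)
Require Import Defs.
From Stdlib Require Import Reals Lra Psatz ClassicalEpsilon.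
Open Scope R_scope.

Lemma rsum_ext n F G : (forall i, (i < n)%nat -> F i = G i) -> rsum n F = rsum n G.
Proof. induction n; simpl; intros H; auto. rewrite IHn by (intros; apply H; lia). rewrite H by lia; auto. Qed.

Lemma rsum_le n F G : (forall i, (i < n)%nat -> F i <= G i) -> rsum n F <= rsum n G.
Proof. induction n; simpl; intros H; [lra|]. assert (H1 := H n ltac:(lia)).
  assert (rsum n F <= rsum n G) by (apply IHn; intros; apply H; lia). lra. Qed.

Lemma rsum_plus n F G : rsum n (fun i => F i + G i) = rsum n F + rsum n G.
Proof. induction n; simpl; [lra|]. rewrite IHn; ring. Qed.

Lemma rsum_scal n c F : rsum n (fun i => c * F i) = c * rsum n F.
Proof. induction n; simpl; [ring|]. rewrite IHn; ring. Qed.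

Lemma div_le x y p q : 0 < p -> 0 < q -> x * q <= y * p -> x / p <= y / q.
Proof. intros. replace (x/p) with ((x*q) * /(p*q)) by (field; lra).
  replace (y/q) with ((y*p) * /(p*q)) by (field; lra).
  apply Rmult_le_compat_r; auto. left; apply Rinv_0_lt_compat, Rmult_lt_0_compat; auto. Qed.

Lemma div_le_l x y p : 0 < p -> x / p <= y -> x <= y * p.
Proof. intros. replace x with ((x/p)*p) by (field; lra). apply Rmult_le_compat_r; lra. Qed.

Lemma div_le_r x y p : 0 < p -> y <= x / p -> y * p <= x.
Proof. intros. replace x with ((x/p)*p) by (field; lra). apply Rmult_le_compat_r; lra. Qed.

Lemma three_slope f a b c : convex_pos f -> 0 < a -> a < b -> b < c ->
  (f b - f a) / (b - a) <= (f c - f b) / (c - b).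
Proof. intros Hf Ha Hab Hbc.
  set (lam := (c - b) / (c - a)).
  assert (Hl : 0 <= lam <= 1).
  { unfold lam; split. apply Rmult_le_pos; [lra| left; apply Rinv_0_lt_compat; lra].
    replace 1 with ((c-a)/(c-a)) by (field; lra). apply div_le; nra. }
  assert (Hb : lam * a + (1 - lam) * c = b) by (unfold lam; field; lra).
  assert (H := Hf a c lam Ha ltac:(lra) Hl). rewrite Hb in H.
  apply div_le; try lra.
  assert (Hm : (c - a) * f b <= (c - b) * f a + (b - a) * f c).
  { replace ((c-b) * f a + (b-a) * f c) with ((c-a) * (lam * f a + (1-lam) * f c))
      by (unfold lam; field; lra).
    apply Rmult_le_compat_l; lra. }
  nra.
Qed.

Lemma subgrad f t0 : convex_pos f -> 0 < t0 ->
  exists g, forall t, 0 < t -> f t >= f t0 + g * (t - t0).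
Proof. intros Hf Ht0.
  set (E := fun y => exists s, 0 < s < t0 /\ y = (f t0 - f s) / (t0 - s)).
  assert (HB : bound E).
  { exists ((f (t0+1) - f t0) / (t0 + 1 - t0)). intros y [s [Hs ->]].
    apply three_slope; auto; lra. }
  assert (HN : exists y, E y).
  { exists ((f t0 - f (t0/2)) / (t0 - t0/2)). exists (t0/2); split; [lra|auto]. }
  destruct (completeness E HB HN) as [g [Hub Hlub]].
  exists g. intros t Ht.
  destruct (Rtotal_order t t0) as [Hlt|[Heq|Hgt]].
  - assert (Hy : (f t0 - f t)/(t0 - t) <= g) by (apply Hub; exists t; split; [lra|auto]).
    apply div_le_l in Hy; [|lra]. nra.
  - subst; lra.
  - assert (Hg : g <= (f t - f t0) / (t - t0)).
    { apply Hlub. intros y [s [Hs ->]]. apply three_slope; auto; lra. }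
    apply div_le_r in Hg; [|lra]. nra.
Qed.

Lemma fconj_ge f x t : conj_finite f x -> 0 < t -> t * x - f t <= fconj f x.
Proof. intros Hc Ht. unfold fconj.
  destruct (excluded_middle_informative (conj_finite f x)) as [H|H]; [|contradiction].
  destruct (completeness _ _ _) as [m [Hub Hlub]]; simpl.
  apply Hub. exists t; split; auto. Qed.

Lemma conj_at f g t0 : 0 < t0 -> (forall t, 0 < t -> f t >= f t0 + g * (t - t0)) ->
  conj_finite f g /\ fconj f g = t0 * g - f t0.
Proof. intros Ht0 Hs.
  assert (Hb : forall y, conj_set f g y -> y <= t0 * g - f t0).
  { intros y [t [Ht ->]]. specialize (Hs t Ht). nra. }
  assert (Hc : conj_finite f g) by (exists (t0 * g - f t0); exact Hb).
  split; auto. unfold fconj.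
  destruct (excluded_middle_informative (conj_finite f g)) as [H|H]; [|contradiction].
  destruct (completeness _ _ _) as [m [Hub Hlub]]; simpl.
  apply Rle_antisym. apply Hlub; exact Hb. apply Hub. exists t0; split; auto.
Qed.

Theorem theorem10 (f : R -> R) (rho : R) (n : nat) (u : R) :
  convex_pos f -> f 1 = 0 -> 1 < rho -> (2 <= n)%nat ->
  is_uf f n rho u ->
  (forall P g, in_Pn n rho P ->
     (forall i, (i < n)%nat -> conj_finite f (g i)) ->
     expect n P g <= u + / INR n * rsum n (fun i => fconj f (g i))) /\
  (exists P, in_Pn n rho P /\
     forall eps, 0 < eps ->
       exists g, (forall i, (i < n)%nat -> conj_finite f (g i)) /\
         expect n P g >= u + / INR n * rsum n (fun i => fconj f (g i)) - eps).
Proof.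
  intros Hf Hf1 Hrho Hn [[Q [HQ HQu]] Hmax].
  assert (Hnpos : 0 < INR n) by (apply lt_0_INR; lia).
  split.
  - intros P g HP Hg.
    assert (HD := Hmax P HP).
    apply Rle_trans with (Df_unif f n P + / INR n * rsum n (fun i => fconj f (g i))); [|lra].
    unfold Df_unif, expect. rewrite <- rsum_scal, <- rsum_plus.
    apply rsum_le. intros i Hi.
    destruct HP as [Hpos _].
    assert (Ht : 0 < P i / / INR n).
    { apply Rdiv_lt_0_compat; [apply Hpos; auto| apply Rinv_0_lt_compat; auto]. }
    assert (H := fconj_ge f (g i) _ (Hg i Hi) Ht).
    replace (P i * g i) with (/ INR n * (P i / / INR n * g i)) by (field; lra).
    rewrite <- Rmult_plus_distr_l. apply Rmult_le_compat_l; [left; apply Rinv_0_lt_compat; auto|lra].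
  - exists Q. split; auto. intros eps Heps.
    destruct HQ as [Hpos _].
    assert (Hex : forall i, exists gi : R, (i < n)%nat ->
      conj_finite f gi /\ fconj f gi = (Q i / / INR n) * gi - f (Q i / / INR n)).
    { intros i. destruct (Nat.lt_decidable i n) as [Hi|Hi].
      - assert (Ht : 0 < Q i / / INR n).
        { apply Rdiv_lt_0_compat; [apply Hpos; auto| apply Rinv_0_lt_compat; auto]. }
        destruct (subgrad f _ Hf Ht) as [gi Hgi]. exists gi. intros _. apply conj_at; auto.
      - exists 0. intros; contradiction. }
    exists (fun i => proj1_sig (constructive_indefinite_description _ (Hex i))).
    split.
    + intros i Hi. destruct (constructive_indefinite_description _ (Hex i)) as [gi Hgi]; simpl.
      apply (Hgi Hi).
    + rewrite <- HQu. unfold Df_unif, expect. rewrite <- rsum_scal, <- rsum_plus.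
      assert (E : rsum n (fun i => Q i * proj1_sig (constructive_indefinite_description _ (Hex i))) =
        rsum n (fun i => / INR n * f (Q i / / INR n) +
          / INR n * fconj f (proj1_sig (constructive_indefinite_description _ (Hex i))))).
      { apply rsum_ext. intros i Hi.
        destruct (constructive_indefinite_description _ (Hex i)) as [gi Hgi]; simpl.
        destruct (Hgi Hi) as [_ ->]. field. lra. }
      rewrite E. lra.
Qed.
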